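(* Let $G$ be a connected graph and $C$ the vertex set of a block of $G$ such that $G[C]$ is a cycle. Then every connected forcing set $R$ of $G$ excludes at most one segment of $C$; that is, the set $C\setminus R$ is either empty or consists of cyclically consecutive vertices of the cycle $G[C]$ (it does not contain two disjoint, non-adjacent nonempty segments with vertices of $R$ lying between them on both sides).
   Context: A block is a maximal subgraph with no articulation point. Fix a cyclic orientation of $C$; for $u,v\in C$ the segment $(u\hookrightarrow v)$ is the set of vertices of $C$ strictly between $u$ and $v$ traveling along the cycle from $u$ to $v$ in that orientation. Zero forcing: given a set $S$ of initially colored vertices, if a colored vertex $u$ has exactly one uncolored neighbor $w$, then $w$ becomes colored; $S$ is a zero forcing set if repeated application colors all vertices. A connected forcing set is a zero forcing set $S$ with $G[S]$ connected. *)

(* Defs.v *)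
From mathcomp Require Import all_boot.
Set Implicit Arguments. Unset Strict Implicit. Unset Printing Implicit Defensive.

Definition simple_graph (T : finType) (e : rel T) : Prop :=
  symmetric e /\ irreflexive e.

Definition connected_in (T : finType) (e : rel T) (S : {set T}) : Prop :=
  forall x y, x \in S -> y \in S ->
    connect (fun a b => [&& a \in S, b \in S & e a b]) x y.

Definition connected_graph (T : finType) (e : rel T) : Prop :=
  connected_in e [set: T].

Definition no_cut_vertex (T : finType) (e : rel T) (S : {set T}) : Prop :=
  connected_in e S /\ forall v, v \in S -> connected_in e (S :\ v).

(* S is the vertex set of a block: a maximal subgraph (induced, w.l.o.g.)
   that is connected and has no articulation point. *)
Definition is_block (T : finType) (e : rel T) (S : {set T}) : Prop :=
  S != set0 /\ no_cut_vertex e S /\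
  forall S' : {set T}, S \subset S' -> no_cut_vertex e S' -> S' = S.

Definition induced_cycle (T : finType) (e : rel T) (C : {set T}) (s : seq T) : Prop :=
  [/\ uniq s, 3 <= size s, C = [set x in s] &
      forall x y, x \in C -> y \in C -> e x y = (y == next s x) || (x == next s y)].

Inductive zf_reach (T : finType) (e : rel T) : {set T} -> Prop :=
  | zf_done : zf_reach e [set: T]
  | zf_step (S : {set T}) (u w : T) :
      u \in S -> w \notin S -> e u w ->
      (forall x, e u x -> x \notin S -> x = w) ->
      zf_reach e (w |: S) -> zf_reach e S.

Definition zero_forcing_set (T : finType) (e : rel T) (S : {set T}) : Prop :=
  zf_reach e S.

Definition connected_forcing_set (T : finType) (e : rel T) (S : {set T}) : Prop :=
  zero_forcing_set e S /\ connected_in e S.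

(* Main.v *)
Require Import Defs.
From mathcomp Require Import all_boot zify.
Set Implicit Arguments. Unset Strict Implicit. Unset Printing Implicit Defensive.

Section Ear.
Variables (T : finType) (e : rel T).
Hypothesis esym : symmetric e.

Definition eW (W : {set T}) := fun a b => [&& a \in W, b \in W & e a b].

Lemma eW_sym (W : {set T}) : connect_sym (eW W).
Proof. apply: sym_connect_sym => a b; rewrite /eW esym; by case: (a \in W); case: (b \in W). Qed.

Lemma path_conn (W : {set T}) u q : path e u q -> {subset u :: q <= W} -> connect (eW W) u (last u q).
Proof.
elim: q u => [|a q IH] u /=; first by [].
case/andP=> eua pa sub.
apply: connect_trans (IH a pa _).
  apply: connect1; rewrite /eW eua !sub ?inE ?eqxx ?orbT //.
by move=> z zq; apply: sub; rewrite inE zq orbT.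
Qed.

Lemma conn_mono (W W' : {set T}) x y : W \subset W' -> connect (eW W) x y -> connect (eW W') x y.
Proof.
move=> sWW'; apply: connect_sub => a b /andP [aW /andP [bW eab]].
by apply: connect1; rewrite /eW eab !(subsetP sWW').
Qed.

Lemma conn_via (W B : {set T}) : B \subset W -> connected_in e B ->
  (forall x, x \in W -> exists2 y, y \in B & connect (eW W) x y) -> connected_in e W.
Proof.
move=> sBW cB H x y xW yW.
have [bx bxB cx] := H x xW; have [by' byB cy] := H y yW.
have:= connect_trans cx (connect_trans (conn_mono sBW (cB _ _ bxB byB)) _).
move/(_ y); rewrite eW_sym; apply; exact: cy.
Qed.

Lemma ear (C : {set T}) u q : connected_in e C -> (forall w, w \in C -> connected_in e (C :\ w)) ->
  u \in C -> path e u q -> uniq (u :: q) -> last u q \in C -> last u q != u ->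
  (forall y, y \in q -> y \in C -> y = last u q) ->
  no_cut_vertex e (C :|: [set y in q]).
Proof.
move=> cC cCw uC pq uq vC vu qC.
set S := C :|: [set y in q].
have uqS : {subset u :: q <= S}.
  move=> z; rewrite inE => /orP [/eqP->|zq]; rewrite !inE ?uC ?zq ?orbT //.
split.
  apply: (@conn_via S C); first by apply/subsetP=> z zC; rewrite !inE zC.
    exact: cC.
  move=> x; rewrite !inE => /orP [xC|xq]; first by exists x.
  exists u => //; rewrite eW_sym.
  case/splitPr: xq pq uq uqS => q1 q2.
  rewrite -cat_rcons cat_path => /andP [p1 _] _ sub.
  have := path_conn p1; rewrite last_rcons; apply.
  by move=> z zi; apply: sub; move: zi; rewrite !inE mem_cat mem_rcons !inE; case/orP=> [->|/orP[->|->]]; rewrite ?orbT.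
move=> w wS.
have cCw' : connected_in e (C :\ w).
  case: (boolP (w \in C)) => wC; first exact: cCw.
  suff -> : C :\ w = C by [].
  apply/setP=> z; rewrite !inE; case: eqP => // ->; by rewrite (negPf wC).
apply: (@conn_via (S :\ w) (C :\ w)).
    by apply/subsetP=> z; rewrite !inE => /andP [-> ->].
  exact: cCw'.
move=> x; rewrite !inE => /andP [xw /orP [xC|xq]].
  by exists x; rewrite // !inE xw xC.
case/splitPr: xq pq uq uqS vu vC => q1 q2.
rewrite -cat_rcons cat_path last_cat last_rcons => /andP [p1 p2] uq sub vu vC.
have subW : forall z, z \in u :: q1 ++ x :: q2 -> z != w -> z \in S :\ w.
  move=> z zi zw; rewrite in_setD1 zw /=; apply: sub; by rewrite cat_rcons.
have: uniq ((u :: q1) ++ (x :: q2)) by move: uq; rewrite cat_rcons.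
rewrite cat_uniq => /and3P [_ nh _].
case: (boolP (w \in u :: q1)) => wi.
  have wn : w \notin x :: q2 by apply: contra nh => wq; apply/hasP; exists w.
  exists (last x q2).
    rewrite !inE vC andbT; apply: contraNneq wn => <-; exact: mem_last.
  apply: path_conn => // z zi; apply: subW.
    by rewrite inE mem_cat orbC; move: zi; rewrite !inE => /orP [->|->]; rewrite ?orbT.
  by apply: contraNneq wn => <-.
exists u.
  rewrite !inE uC andbT; apply: contraNneq wi => ->; exact: mem_head.
rewrite eW_sym.
have := path_conn p1; rewrite last_rcons; apply => z zi; apply: subW.
  by move: zi; rewrite !inE mem_cat mem_rcons !inE; case/orP=> [->|/orP[->|->]]; rewrite ?orbT.
move: zi; rewrite inE mem_rcons => /orP [/eqP->|/orP [/eqP->|zq1]].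
- by apply: contraNneq wi => <-; exact: mem_head.
- by [].
- by apply: contraNneq wi => <-; rewrite in_cons; apply/orP; right; exact: zq1.
Qed.

End Ear.

Lemma index_next (T : eqType) (s : seq T) c : uniq s -> c \in s ->
  index (next s c) s = if (index c s).+1 < size s then (index c s).+1 else 0.
Proof.
case: s => [|y0 p] // us cs.
rewrite next_nth cs.
have ilt : index c (y0 :: p) < size (y0 :: p) by rewrite index_mem.
case: ifP => h.
  have -> : nth y0 p (index c (y0 :: p)) = nth y0 (y0 :: p) (index c (y0 :: p)).+1 by [].
  by rewrite index_uniq.
rewrite nth_default /= ?eqxx //.
move: ilt h => /=; lia.
Qed.

Lemma A1 ix iy ic n : ix < (if ic.+1 < n then ic.+1 else 0) ->
  (if ic.+1 < n then ic.+1 else 0) < iy -> ic != ix -> ix < ic < iy.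
Proof. by case: (ltnP ic.+1 n) => *; lia. Qed.

Lemma A2 ix iy iz n : ix < iz -> iz < iy -> iy < n ->
  (if iz.+1 < n then iz.+1 else 0) != iy -> ix < (if iz.+1 < n then iz.+1 else 0) < iy.
Proof. by case: (ltnP iz.+1 n) => *; lia. Qed.

Section Walk.
Variables (T : finType) (e : rel T) (C R : {set T}) (s : seq T) (x y : T) (ix iy : nat).
Hypotheses (us : uniq s) (Cs : C = [set z in s])
  (eC : forall a b, a \in C -> b \in C -> e a b = (b == next s a) || (a == next s b))
  (xs : x \in s) (ys : y \in s) (ixE : index x s = ix) (iyE : index y s = iy)
  (xR : x \notin R) (yR : y \notin R).

Definition Iin z := (z \in C) && (ix < index z s < iy).

Lemma cyc_fact z c : Iin z -> c \in C -> c != x -> c != y -> e c z -> Iin c.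
Proof.
case/andP=> zC /andP [h1 h2] cC cx cy.
have zs : z \in s by rewrite Cs inE in zC.
have cs : c \in s by rewrite Cs inE in cC.
have iyl : iy < size s by rewrite -iyE index_mem.
have neq : forall a, a \in s -> a != x -> index a s != ix.
  by move=> a as_ ax; apply: contra ax => /eqP h; rewrite -(nth_index x as_) h -ixE nth_index.
have neqy : index c s != iy.
  by apply: contra cy => /eqP h; rewrite -(nth_index x cs) h -iyE nth_index.
have := neq c cs cx; move: neqy.
rewrite eC // /Iin cC /= => n1 n2 /orP [/eqP zE|/eqP cE].
  move: h1 h2; rewrite zE index_next // => h1 h2; exact: A1 h1 h2 n2.
move: n1 n2; rewrite cE index_next // => n1 n2; exact: A2 h1 h2 iyl n1.
Qed.

Definition ear_ex := exists u z q, [/\ u \in C, z \notin C, e u z, path e z q &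
   [/\ last z q \in C, last z q != u & forall w, w \in q -> w \in C -> w = last z q]].

Lemma walk n : forall c q, size q <= n -> path (eW e R) c q -> c \in C -> ~~ Iin c ->
  Iin (last c q) -> ear_ex.
Proof.
elim: n => [|n IH] c [|w q1] //=; first by move=> _ _ _ /negPf->.
  by move=> _ _ _ /negPf->.
move=> sz /andP [/and3P [cR wR ecw] pq] cC nIc Il.
case: (boolP (w \in C)) => wC.
  apply: (IH w q1) => //.
  apply: contra nIc => Iw; apply: (cyc_fact Iw cC) => //.
    by apply: contraNneq xR => <-.
  by apply: contraNneq yR => <-.
have lC : last w q1 \in C by case/andP: Il.
have hasq : has (fun v => v \in C) q1.
  apply/hasP; exists (last w q1) => //.
  have := mem_last w q1; rewrite inE => /orP [/eqP h|//].
  by move: lC; rewrite h (negPf wC).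
pose j := find (fun v => v \in C) q1.
have jlt : j < size q1 by rewrite /j -has_find.
pose d := nth w q1 j.
have dC : d \in C := nth_find w hasq.
have pe : path e w q1 by apply: sub_path pq => a b /and3P [].
have spl := cat_take_drop j.+1 q1.
have lt : last w (take j.+1 q1) = d by rewrite (take_nth w jlt) last_rcons.
case: (boolP (d == c)) => [/eqP dc|dc].
  apply: (IH c (drop j.+1 q1)) => //.
  - rewrite size_drop; apply: leq_trans (leq_subr _ _) _; exact: sz.
  - by move: pq; rewrite -{1}spl cat_path lt dc => /andP [].
  - by rewrite -dc -lt -last_cat spl.
exists c, w, (take j.+1 q1); split => //; last split.
- by move: pe; rewrite -{1}spl cat_path => /andP [].
- by rewrite lt.
- by rewrite lt.
rewrite lt (take_nth w jlt) => v; rewrite mem_rcons inE => /orP [/eqP //|vt vC].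
case/(nthP w): vt => i; rewrite size_take jlt => ij.
rewrite nth_take // => vi.
by have := before_find w ij; rewrite vi vC.
Qed.

End Walk.

Lemma index_cons_t (T : eqType) (a z : T) t : z \in t -> a \notin t -> index z (a :: t) = (index z t).+1.
Proof. by move=> zt at_ /=; case: eqP => // az; rewrite az zt in at_. Qed.

Lemma mem_before (T : eqType) (p : pred T) (t : seq T) (z : T) :
  z \in take (find p t) t -> ~~ p z.
Proof.
case/(nthP z) => i; rewrite size_take => hi.
have ilt : i < find p t by move: hi; case: (ltnP (find p t) (size t)) => // h hi; apply: leq_trans hi h.
by rewrite nth_take // => <-; rewrite (before_find z ilt).
Qed.

Lemma core (T : finType) (e : rel T) (C R : {set T}) (a : T) (t : seq T) :
  symmetric e -> no_cut_vertex e C ->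
  (forall S' : {set T}, C \subset S' -> no_cut_vertex e S' -> S' = C) ->
  uniq (a :: t) -> C = [set z in a :: t] ->
  (forall x y, x \in C -> y \in C -> e x y = (y == next (a :: t) x) || (x == next (a :: t) y)) ->
  connected_in e R -> a \in R ->
  C :\: R = set0 \/ exists j k, j < size t /\ C :\: R = [set z in take k (rot j.+1 (a :: t))].
Proof.
move=> esym [cC cCw] maxC us Cs eC cR aR.
have at_ : a \notin t by case/andP: us.
have ut : uniq t by case/andP: us.
pose j := find (fun v => v \notin R) t.
case: (boolP (has (fun v => v \notin R) t)) => hasj; last first.
  left; apply/setP => z; rewrite in_setD in_set0; apply/negbTE; apply/andP => [[zR]].
  rewrite Cs inE inE => /orP [/eqP za|zt]; first by rewrite za aR in zR.
  by move: hasj; apply/negP/negPn/hasP; exists z.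
have jlt : j < size t by rewrite -has_find.
pose t2 := drop j t.
pose k := find (fun v => v \in R) t2.
have tspl : t = take j t ++ take k t2 ++ drop k t2 by rewrite !cat_take_drop.
case: (boolP (all (fun v => v \in R) (drop k t2))) => allk.
  right; exists j, k; split => //.
  have -> : take k (rot j.+1 (a :: t)) = take k t2.
    by rewrite /rot /= -/t2 takel_cat // /k find_size.
  apply/setP => z; rewrite in_setD Cs !in_set in_cons.
  apply/idP/idP.
    case/andP => zR /orP [/eqP za|zt]; first by rewrite za aR in zR.
    move: zt; rewrite tspl !mem_cat => /or3P [zt|//|zd].
      by have := mem_before zt; rewrite /= zR.
    by move/allP: allk => /(_ z zd); rewrite (negPf zR).
  move=> zk; rewrite (mem_before zk) /=.
  by rewrite tspl !mem_cat zk !orbT.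
right; exfalso.
case/allPn: allk => y yd yR.
have klt : k < size t2 by case: (ltnP k (size t2)) => // h; rewrite drop_oversize in yd.
have hask : has (fun v => v \in R) t2 by rewrite has_find.
pose b := nth a t2 k.
have bR : b \in R := nth_find a hask.
pose x := nth a t j.
have xR : x \notin R := nth_find a hasj.
have bE : b = nth a t (j + k) by rewrite /b nth_drop.
have jklt : j + k < size t by move: klt; rewrite size_drop; move: (size t) => m; clear; lia.
have k0 : 0 < k.
  rewrite lt0n; apply: contraNneq xR => k0; move: bR; rewrite /b k0 /t2 nth_drop addn0.
  by [].
have bt : b \in t by rewrite bE mem_nth.
have xt : x \in t by rewrite mem_nth.
have yt : y \in t by apply: (@mem_drop j); apply: (@mem_drop k).
have ixt : index x t = j by rewrite index_uniq.
have ibt : index b t = j + k by rewrite bE index_uniq.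
have iyt : j + k < index y t.
  have yd' : y \in drop (j + k) t by rewrite addnC -drop_drop.
  have ye : index y t = j + k + index y (drop (j + k) t).
    rewrite -{1}(cat_take_drop (j + k) t) index_cat size_take jklt.
    case: ifP => // yt'.
    have := ut; rewrite -(cat_take_drop (j + k) t) cat_uniq => /and3P [_ nh _].
    by case/negP: nh; apply/hasP; exists y.
  rewrite ye -[X in X < _]addn0 ltn_add2l lt0n.
  apply: contraNneq yR => i0.
  have : nth a (drop (j + k) t) (index y (drop (j + k) t)) = y by rewrite nth_index.
  by rewrite i0 nth_drop addn0 -bE => <-.
set s := a :: t.
have Iw := @walk T e C R s x y j.+1 (index y s) us Cs eC.
have xs : x \in s by rewrite inE xt orbT.
have ys : y \in s by rewrite inE yt orbT.
have ixs : index x s = j.+1 by rewrite /s index_cons_t // ixt.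
have bC : b \in C by rewrite Cs inE inE bt orbT.
have aC : a \in C by rewrite Cs inE inE eqxx.
have := cR a b aR bR; case/connectP => q pq bq.
have [u [z [q' [uC zC euz pzq [lC lu hq]]]]] : ear_ex e C.
  apply: (Iw xs ys ixs erefl xR yR (size q) a q (leqnn _) pq aC).
    by rewrite /Iin aC /= /s /= eqxx.
  have ab : (a == b) = false by apply: contraNF at_ => /eqP ->.
  have ay : (a == y) = false by apply: contraNF at_ => /eqP ->.
  rewrite -bq /Iin bC /= ab ay ibt.
  move: k0 iyt; clear; lia.
move: lC lu hq; case: (shortenP pzq) => p' pp' up' sub' lC lu hq.
have Hear := @ear T e esym C u (z :: p') cC cCw uC.
have hS := Hear (introT andP (conj euz pp')).
have uu : uniq (u :: z :: p').
  rewrite cons_uniq up' andbT inE negb_or; apply/andP; split.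
    by apply: contraNneq zC => <-.
  by apply: contra lu => up; apply/eqP; symmetry; apply: hq => //; exact: sub' up.
have hC : forall w, w \in z :: p' -> w \in C -> w = last u (z :: p').
  move=> w; rewrite inE => /orP [/eqP ->|wp wC]; first by rewrite (negPf zC).
  exact: hq (sub' _ wp) wC.
have sub : C \subset C :|: [set y in z :: p'] by apply/subsetP => w wC; rewrite inE wC.
have SE := maxC _ sub (hS uu lC lu hC).
have : z \in C :|: [set y in z :: p'] by rewrite in_setU in_set mem_head orbT.
by rewrite SE => h; move: zC; rewrite h.
Qed.

Theorem lemma3 (T : finType) (e : rel T) (C : {set T}) (s : seq T) (R : {set T}) :
  simple_graph e -> connected_graph e ->
  is_block e C -> induced_cycle e C s ->
  connected_forcing_set e R ->
  C :\: R = set0 \/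
  exists i k, C :\: R = [set x in take k (rot i s)].
Proof.
move=> [esym _] _ [_ [ncv maxC]] [us _ Cs eC] [_ cR].
case: (pickP (fun a => (a \in C) && (a \in R))) => [a /andP [aC aR]|none]; last first.
  right; exists 0, (size s); rewrite rot0 take_size.
  apply/setP => z; rewrite in_setD -Cs.
  case: (boolP (z \in C)) => zC; rewrite ?andbF ?andbT //.
  by move: (none z); rewrite /= zC /= => ->.
have as_ : a \in s by rewrite Cs inE in aC.
have rE := rot_index as_.
move: rE; set t := (drop _ s ++ take _ s) => rE.
have us' : uniq (a :: t) by rewrite -rE rot_uniq.
have Cs' : C = [set z in a :: t].
  by rewrite -rE Cs; apply/setP => z; rewrite !inE mem_rot.
have eC' : forall x y, x \in C -> y \in C -> e x y = (y == next (a :: t) x) || (x == next (a :: t) y).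
  by move=> x y xC yC; rewrite -rE !next_rot //; exact: eC.
case: (core esym ncv maxC us' Cs' eC' cR aR) => [->|[j [k [jlt E]]]]; first by left.
right.
have szs : size (a :: t) = size s by rewrite -rE size_rot.
eexists; exists k; rewrite E -rE rot_add_mod //.
  exact: index_size.
by rewrite -szs; apply: ltnW.
Qed.
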